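(* Let $\mathbb{H}$ be a real Hilbert space, $\mathbf{x}$ a random vector in $\mathbb{H}$ with $\mathbb{E}[\|\mathbf{x}\|^2]<\infty$, and $\mathcal{S}\boldsymbol{\theta}=\mathbb{E}[\langle\boldsymbol{\theta},\mathbf{x}\rangle\mathbf{x}]$. Assume $\mathcal{S}$ has an orthonormal basis $(\mathbf{e}_i)$ of eigenvectors with eigenvalues $0<\lambda_i<\tfrac12$. Let $\gamma\in(0,1)$ and $\mathcal{T}=\mathrm{Id}-\gamma\mathcal{S}$. Let $(t_n)_{n\ge1}$ be positive with $\sum_n\frac{1}{nt_n}<\infty$, let $\boldsymbol{\theta}\in\mathbb{H}$ and $0\le\kappa<\beta$. If $\|\mathcal{T}^n\boldsymbol{\theta}\|_\kappa^2\le\frac{1}{n^{\beta-\kappa}t_n}$ for all $n\ge1$, then $\|\boldsymbol{\theta}\|_\beta^2<\infty$.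
   Context: For $\boldsymbol{\theta}=\sum_i\theta_i\mathbf{e}_i$ and $\beta\in\mathbb{R}$, $\|\boldsymbol{\theta}\|_\beta^2:=\sum_i\lambda_i^{-\beta}\theta_i^2\in[0,\infty]$. *)

(* Defs.v *)
From HB Require Import structures.
From mathcomp Require Import all_boot all_order all_algebra.
From mathcomp Require Import all_classical all_reals all_analysis.
Set Implicit Arguments. Unset Strict Implicit. Unset Printing Implicit Defensive.
Import Order.TTheory GRing.Theory Num.Theory.
Import numFieldNormedType.Exports.
Local Open Scope ring_scope.
Local Open Scope classical_set_scope.

Definition is_inner_product (R : realType) (H : normedModType R)
  (ip : H -> H -> R) : Prop :=
  [/\ (forall u v, ip u v = ip v u),
      (forall (a : R) u v w, ip (a *: u + v) w = a * ip u w + ip v w) &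
      (forall u, ip u u = `|u| ^+ 2)].

Definition is_ONB (R : realType) (H : normedModType R) (ip : H -> H -> R)
  (I : choiceType) (e : I -> H) : Prop :=
  (forall i j, ip (e i) (e j) = if i == j then 1 else 0) /\
  (forall v, (forall i, ip v (e i) = 0) -> v = 0).

Definition wnorm2 (R : realType) (H : normedModType R) (ip : H -> H -> R)
  (I : choiceType) (e : I -> H) (lam : I -> R) (beta : R) (v : H) : \bar R :=
  \esum_(i in [set: I]) ((lam i `^ (- beta)) * (ip v (e i)) ^+ 2)%:E.

Definition random_vector (R : realType) (H : normedModType R)
  (ip : H -> H -> R) (d : measure_display) (Omega : measurableType d)
  (x : Omega -> H) : Prop :=
  (forall th, measurable_fun [set: Omega] (fun w => ip th (x w))) /\
  measurable_fun [set: Omega] (fun w => `|x w|).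

(* S th = E[<th, x> x], i.e. (the Hilbert-valued expectation being
   characterized weakly) <S th, ph> = E[<th,x><ph,x>] for all ph. *)
Definition is_second_moment_op (R : realType) (H : normedModType R)
  (ip : H -> H -> R) (d : measure_display) (Omega : measurableType d)
  (P : probability Omega R) (x : Omega -> H) (S : H -> H) : Prop :=
  forall th ph,
    (\int[P]_w ((ip th (x w) * ip ph (x w))%:E) = (ip (S th) ph)%:E)%E.

(* Main.v *)
Require Import Defs.
From HB Require Import structures.
From mathcomp Require Import all_boot all_order all_algebra.
From mathcomp Require Import all_classical all_reals all_analysis.
From mathcomp Require Import ring lra.
Import Order.TTheory GRing.Theory Num.Theory.
Import numFieldNormedType.Exports.
Local Open Scope ring_scope.
Local Open Scope classical_set_scope.

Lemma one_sub_ge_exp (R : realType) (x : R) : 0 <= x <= 2^-1 ->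
  expR (- (2 * x)) <= 1 - x.
Proof.
move=> /andP[x0 x1]; rewrite expRN.
have e0 := expR_gt0 (2 * x).
rewrite -div1r ler_pdivrMr //.
have := expR_ge1Dx (2 * x); nra.
Qed.

Lemma key (R : realType) (g l a : R) (n : nat) :
  0 < g < 1 -> 0 < l < 2^-1 -> 0 < a ->
  (Num.truncn ((g * l)^-1) <= n <= (Num.truncn ((g * l)^-1)).*2)%N ->
  l `^ (- a) / (Num.truncn ((g * l)^-1)).+1%:R <=
  (2 * 2 `^ a / expR (-4) ^+ 2) * (n%:R `^ a / n%:R) * ((1 - g * l) ^+ n) ^+ 2.
Proof.
move=> /andP[g0 g1] /andP[l0 l1] a0.
set x := g * l; set m := Num.truncn _ => /andP[mn nm].
have x0 : 0 < x by rewrite mulr_gt0.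
have xl : x <= l by rewrite /x; nra.
have x1 : x < 2^-1 by apply: le_lt_trans xl l1.
have xi0 : 0 <= x^-1 by rewrite invr_ge0 ltW.
have mx : m%:R <= x^-1 by rewrite truncn_le.
have xm : x^-1 < m.+1%:R by apply: truncnS_gt.
have m2 : (2 <= m)%N.
  rewrite truncn_ge_nat //. rewrite -[2%:R]invrK lef_pV2 ?posrE ?invr_gt0 //; exact: ltW.
have n0 : (0 < n)%N by apply: leq_trans mn; apply: leq_trans m2.
have nR0 : 0 < n%:R :> R by rewrite ltr0n.
have mR2 : 2 <= m%:R :> R by rewrite (ler_nat R 2 m).
have mnR : m%:R <= n%:R :> R by rewrite ler_nat.
have nmR : n%:R <= 2 * m%:R :> R by rewrite -natrM mul2n ler_nat.
have xmR : x * m%:R <= 1 by have := mulfV (negbT (gt_eqF x0)); nra.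
have h1 : l `^ (- a) <= 2 `^ a * n%:R `^ a.
  rewrite powRN -powRM ?ler0n //.
  have li : l^-1 <= x^-1 by rewrite lef_pV2 ?posrE.
  have li2 : l^-1 <= 2 * n%:R.
    apply: le_trans li _; apply: le_trans (ltW xm) _; rewrite -addn1 natrD; lra.
  have lge : 1 <= 2 * n%:R * l by have := mulVf (negbT (gt_eqF l0)); nra.
  have h : 1 <= (2 * n%:R * l) `^ a.
    have a0' : 0 <= a by apply ltW.
    have hh := @ge0_ler_powR R a a0'.
    have := hh 1 (2 * n%:R * l). rewrite (powR1 R); apply => //; rewrite nnegrE //; nra.
  rewrite powRM in h; [|lra|exact: ltW].
  rewrite -div1r ler_pdivrMr ?powR_gt0 //.
have h2 : n%:R / m.+1%:R <= 2 :> R.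
  rewrite ler_pdivrMr ?ltr0n //; rewrite -addn1 natrD; lra.
have e1 : expR (- (2 * x)) <= 1 - x by apply: one_sub_ge_exp; lra.
have h3 : expR (-4) <= (1 - x) ^+ n.
  apply: (@le_trans _ _ (expR (- (2 * x)) ^+ n)).
    rewrite -expRM_natr ler_expR; nra.
  apply: lerXn2r => //; rewrite nnegrE ?expR_ge0 //; lra.
have E0 := expR_gt0 (-4 : R).
have h4 : 1 <= ((1 - x) ^+ n) ^+ 2 / expR (-4) ^+ 2.
  rewrite ler_pdivlMr ?exprn_gt0 // mul1r.
  apply: lerXn2r => //; rewrite nnegrE ?expR_ge0 //; lra.
have pa := powR_gt0 a (ltr0n R 2).
have pn := @powR_gt0 R n%:R a nR0.
set Q := (((1 - x) ^+ n) ^+ 2 / expR (-4) ^+ 2) in h4 *.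
have -> : 2 * 2 `^ a / expR (-4) ^+ 2 * (n%:R `^ a / n%:R) * (1 - x) ^+ n ^+ 2
   = (2 `^ a * n%:R `^ a) * (2 / n%:R) * Q.
  rewrite /Q; field; rewrite ?gt_eqF //. 
rewrite -[X in X <= _]mulr1; apply: ler_pM => //.
- by rewrite mulr_ge0 ?powR_ge0 ?invr_ge0 ?ler0n.
- apply: ler_pM => //; rewrite ?powR_ge0 ?invr_ge0 ?ler0n //.
  by rewrite ler_pdivlMr // mulrC.
Qed.

Lemma sum_subrange (R : realType) (F : nat -> R) a b c d :
  (c <= a)%N -> (b <= d)%N -> (forall n, 0 <= F n) ->
  \sum_(a <= n < b) F n <= \sum_(c <= n < d) F n.
Proof.
move=> ca bd F0.
have [ab|ba] := leqP a b; last first.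
  by rewrite big_geq ?(ltnW ba) // sumr_ge0.
rewrite (@big_cat_nat _ _ _ a c d) //; last by apply: leq_trans bd.
rewrite (@big_cat_nat _ _ _ b a d) //.
apply: (@le_trans _ _ (\sum_(a <= i < b) F i + \sum_(b <= i < d) F i)).
  by rewrite lerDl sumr_ge0.
by rewrite lerDr sumr_ge0.
Qed.

Theorem proposition3 (R : realType) (H : completeNormedModType R)
  (ip : H -> H -> R) (d : measure_display) (Omega : measurableType d)
  (P : probability Omega R) (x : Omega -> H) (S : H -> H)
  (I : choiceType) (e : I -> H) (lam : I -> R)
  (gamma : R) (t : nat -> R) (theta : H) (kappa beta : R) :
  is_inner_product ip ->
  random_vector ip x ->
  (\int[P]_w ((`|x w| ^+ 2)%:E) < +oo)%E ->
  is_second_moment_op ip P x S ->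
  is_ONB ip e ->
  (forall i, S (e i) = lam i *: e i) ->
  (forall i, 0 < lam i < 2^-1) ->
  0 < gamma < 1 ->
  (forall n, (0 < n)%N -> 0 < t n) ->
  (\sum_(1 <= n <oo) ((n%:R * t n)^-1)%:E < +oo)%E ->
  0 <= kappa -> kappa < beta ->
  (forall n, (0 < n)%N ->
     (wnorm2 ip e lam kappa (iter n (fun v : H => (v - gamma *: S v)%R) theta)
      <= ((n%:R `^ (beta - kappa) * t n)^-1)%:E)%E) ->
  (wnorm2 ip e lam beta theta < +oo)%E.
Proof.
move=> [ipsym iplin ipsq] _ _ hS [honb hcomp] hSe hlam /andP[g0 g1] ht hsum k0 kb hT.
have ip0 w : ip 0 w = 0.
  have := iplin 1 0 0 w; rewrite scaler0 addr0 mul1r => h; lra.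
have ipZ a u w : ip (a *: u) w = a * ip u w.
  by have := iplin a u 0 w; rewrite addr0 ip0 addr0.
have ipB u v w : ip (u - v) w = ip u w - ip v w.
  have := iplin (-1) v u w; rewrite scaleN1r addrC => ->; ring.
have ipS v i : ip (S v) (e i) = lam i * ip v (e i).
  have h1 := hS v (e i); have h2 := hS (e i) v.
  have : (ip (S v) (e i))%:E = (ip (S (e i)) v)%:E.
    rewrite -h1 -h2; congr integral; apply: funext => w; by rewrite mulrC.
  by case => ->; rewrite hSe ipZ ipsym.
have coord n i : ip (iter n (fun v : H => (v - gamma *: S v)%R) theta) (e i)
    = (1 - gamma * lam i) ^+ n * ip theta (e i).
  elim: n => [|n IH] /=; first by rewrite expr0 mul1r.
  by rewrite ipB ipZ ipS IH exprS; ring.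
set a := beta - kappa.
have a0 : 0 < a by rewrite /a subr_gt0.
set K := 2 * 2 `^ a / expR (-4) ^+ 2.
have K0 : 0 <= K by rewrite /K mulr_ge0 ?invr_ge0 ?exprn_ge0 ?expR_ge0 ?mulr_ge0 ?powR_ge0.
set ser := (\sum_(1 <= n <oo) ((n%:R * t n)^-1)%:E)%E.
have ser0 : (0 <= ser)%E.
  apply: nneseries_ge0 => n n1 _; rewrite lee_fin invr_ge0 mulr_ge0 ?ler0n //.
  exact/ltW/ht.
have serfin : ser \is a fin_num by rewrite ge0_fin_numE.
set M := fine ser.
have partial N : \sum_(1 <= n < N) (n%:R * t n)^-1 <= M.
  rewrite -lee_fin /M fineK // -sumEFin.
  apply: (@nneseries_lim_ge R (fun n => ((n%:R * t n)^-1)%:E) xpredT 1%N N).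
  move=> n n1 _; rewrite lee_fin invr_ge0 mulr_ge0 ?ler0n //; exact/ltW/ht.
have bound : (wnorm2 ip e lam beta theta <= (K * M)%:E)%E.
  rewrite /wnorm2 /esum; apply: ge_ereal_sup => _ [X [finX _] <-].
  rewrite fsumEFin // lee_fin fsbig_finite //=.
  set s : seq I := finmap.enum_fset (fset_set X).
  pose mm i := Num.truncn ((gamma * lam i)^-1).
  pose N := (\max_(i <- s) (mm i).*2)%N.
  pose G n i := K * (n%:R `^ a / n%:R) *
     (lam i `^ (- kappa) * ip (iter n (fun v : H => (v - gamma *: S v)%R) theta) (e i) ^+ 2).
  have G0 n i : 0 <= G n i.
    rewrite /G; apply: mulr_ge0; [apply: mulr_ge0 => //; apply: divr_ge0 | apply: mulr_ge0];
      by rewrite ?powR_ge0 ?ler0n ?sqr_ge0.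
  have hg : 0 < gamma < 1 by rewrite g0 g1.
  have stepA i : i \in s ->
      lam i `^ (- beta) * ip theta (e i) ^+ 2 <= \sum_(1 <= n < N.+1) G n i.
    move=> his; have /andP[l0 l1] := hlam i.
    have eq1 : lam i `^ (- beta) * ip theta (e i) ^+ 2 =
        \sum_(mm i <= n < (mm i).*2.+1)
           (lam i `^ (- kappa) * ip theta (e i) ^+ 2 * (lam i `^ (- a) / (mm i).+1%:R)).
      rewrite sumr_const_nat (_ : ((mm i).*2.+1 - mm i = (mm i).+1)%N); last first.
        by rewrite -addnn subSn ?leq_addr // addnK.
      rewrite -[(_ * _) *+ _]mulr_natr (_ : - beta = - kappa + - a); last by rewrite /a; ring.
      rewrite powRD; last by apply/implyP => _; exact: negbT (gt_eqF l0).
      by field; rewrite addrC natr1 pnatr_eq0.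
    rewrite eq1; apply: (@le_trans _ _ (\sum_(mm i <= n < (mm i).*2.+1) G n i)).
      apply: ler_sum_nat => n /andP[h1 h2].
      have hn : (mm i <= n <= (mm i).*2)%N by rewrite h1 -ltnS.
      have hk := @key R gamma (lam i) a n hg (hlam i) a0 hn.
      rewrite /G coord.
      have -> : K * (n%:R `^ a / n%:R) * (lam i `^ (- kappa) *
         ((1 - gamma * lam i) ^+ n * ip theta (e i)) ^+ 2) =
         lam i `^ (- kappa) * ip theta (e i) ^+ 2 *
         (K * (n%:R `^ a / n%:R) * ((1 - gamma * lam i) ^+ n) ^+ 2) by ring.
      apply: ler_wpM2l; first by rewrite mulr_ge0 ?powR_ge0 ?sqr_ge0.
      exact: hk.
    apply: sum_subrange => //.
      have h1 : 1 <= (gamma * lam i)^-1.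
        rewrite invf_ge1 ?mulr_gt0 //; nra.
      rewrite /mm truncn_ge_nat //; last by rewrite invr_ge0; apply: mulr_ge0; exact: ltW.
    rewrite ltnS; apply: (@leq_bigmax_seq _ _ _ (fun j => (mm j).*2)) => //.
  apply: (@le_trans _ _ (\sum_(i <- s) \sum_(1 <= n < N.+1) G n i)).
    rewrite big_seq [X in _ <= X]big_seq; apply: ler_sum => i his; exact: stepA.
  rewrite exchange_big /=.
  apply: (@le_trans _ _ (\sum_(1 <= n < N.+1) K * (n%:R * t n)^-1)).
    apply: ler_sum_nat => n /andP[n1 _].
    rewrite /G -mulr_sumr.
    have hb : \sum_(i <- s) lam i `^ (- kappa) *
        ip (iter n (fun v : H => (v - gamma *: S v)%R) theta) (e i) ^+ 2
        <= (n%:R `^ a * t n)^-1.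
      rewrite -lee_fin -sumEFin.
      apply: le_trans (hT n n1).
      rewrite /wnorm2; apply: esum_ge; exists X; first by split.
      by rewrite fsbig_finite.
    have tn0 := ht n n1.
    have nR0 : 0 < n%:R :> R by rewrite ltr0n.
    have pn := @powR_gt0 R n%:R a nR0.
    apply: le_trans (ler_wpM2l _ hb) _.
      by rewrite mulr_ge0 ?divr_ge0 ?powR_ge0 ?ler0n.
    rewrite le_eqVlt; apply/orP; left; apply/eqP.
    by field; rewrite !gt_eqF.
  apply: (@le_trans _ _ (K * \sum_(1 <= n < N.+1) (n%:R * t n)^-1)).
    by rewrite mulr_sumr.
  by apply: ler_wpM2l => //; exact: partial.
by apply: le_lt_trans bound _; rewrite ltry.
Qed.
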